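(* Let $A$ be an observable on $\mathbb C^d$ with orthonormal eigenbasis $\{\varphi_k\}_{k=0}^{d-1}$. For all unit vectors $\Phi,\Psi\in\mathbb C^d$, $$d(T_{A\Phi}\Psi,\Phi)\le 2\,d(\Psi,\Phi).$$
   Context: $\mathcal H=\mathbb C^d$ with the standard inner product; states are unit vectors. An observable $A$ is non-degenerate and identified with its orthonormal eigenbasis $\{\varphi_k\}_{k=0}^{d-1}$. Bures metric: $d(\Phi,\Psi)=\sqrt{2-2|\langle\Phi,\Psi\rangle|}$. Physical imposition operator: $T_{A\Phi}\Psi=\sum_{k=0}^{d-1}|\langle\varphi_k,\Phi\rangle|\,u_k(\Psi)\,\varphi_k$, where $u_k(\Psi)=\langle\varphi_k,\Psi\rangle/|\langle\varphi_k,\Psi\rangle|$ if $\langle\varphi_k,\Psi\rangle\ne0$ and $u_k(\Psi)=1$ otherwise. *)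

(* Defs.v *)
From HB Require Import structures.
From mathcomp Require Import all_boot all_order all_algebra.
Set Implicit Arguments. Unset Strict Implicit. Unset Printing Implicit Defensive.
Import Order.TTheory GRing.Theory Num.Theory.
Local Open Scope ring_scope.

Definition inner (C : numClosedFieldType) (d : nat) (x y : 'cV[C]_d) : C :=
  \sum_(i < d) (x i 0)^* * y i 0.

Definition unit_vec (C : numClosedFieldType) (d : nat) (x : 'cV[C]_d) : Prop :=
  inner x x = 1.

Definition orthonormal_basis (C : numClosedFieldType) (d : nat)
  (phi : 'I_d -> 'cV[C]_d) : Prop :=
  forall j k : 'I_d, inner (phi j) (phi k) = (j == k)%:R.

Definition bures (C : numClosedFieldType) (d : nat) (x y : 'cV[C]_d) : C :=
  sqrtC (2 - 2 * `|inner x y|).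

Definition phase (C : numClosedFieldType) (c : C) : C :=
  if c != 0 then c / `|c| else 1.

(* physical imposition operator T_{A Phi} Psi, A identified with basis phi *)
Definition imposition (C : numClosedFieldType) (d : nat)
  (phi : 'I_d -> 'cV[C]_d) (Phi Psi : 'cV[C]_d) : 'cV[C]_d :=
  \sum_(k < d) (`|inner (phi k) Phi| * phase (inner (phi k) Psi)) *: phi k.

(* Main.v *)
Require Import Defs.
From HB Require Import structures.
From mathcomp Require Import all_boot all_order all_algebra.
From mathcomp Require Import ring.
Import Order.TTheory GRing.Theory Num.Theory.
Local Open Scope ring_scope.

Lemma parseval (C : numClosedFieldType) (d : nat) (phi : 'I_d -> 'cV[C]_d)
  (x y : 'cV[C]_d) : orthonormal_basis phi ->
  inner x y = \sum_(k < d) (inner (phi k) x)^* * inner (phi k) y.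
Proof.
move=> hON.
pose U : 'M[C]_d := \matrix_(i, k) phi k i 0.
pose Uh : 'M[C]_d := \matrix_(k, i) (phi k i 0)^*.
have h1 : Uh *m U = 1%:M.
  apply/matrixP => j k; rewrite !mxE -hON /inner.
  by apply: eq_bigr => i _; rewrite !mxE.
have h2 := mulmx1C h1.
have hd : forall i i' : 'I_d, \sum_(k < d) phi k i 0 * (phi k i' 0)^* = (i == i')%:R.
  move=> i i'; have := congr1 (fun M : 'M[C]_d => M i i') h2; rewrite !mxE => <-.
  by apply: eq_bigr => k _; rewrite !mxE.
transitivity (\sum_(i < d) \sum_(i' < d) (x i 0)^* * (i == i')%:R * y i' 0).
  rewrite /inner; apply: eq_bigr => i _.
  rewrite (bigD1 i) //= eqxx mulr1 big1 ?addr0 // => i' /negbTE.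
  by rewrite eq_sym => ->; rewrite mulr0 mul0r.
rewrite /inner.
have e : forall k : 'I_d, (\sum_(i < d) (phi k i 0)^* * x i 0)^* * \sum_(i < d) (phi k i 0)^* * y i 0
   = \sum_(i < d) \sum_(i' < d) (x i 0)^* * (phi k i 0 * (phi k i' 0)^*) * y i' 0.
  move=> k; rewrite rmorph_sum big_distrl /=; apply: eq_bigr => i _.
  rewrite big_distrr /=; apply: eq_bigr => i' _.
  by rewrite rmorphM /= conjCK [phi k i 0 * _]mulrC !mulrA.
rewrite (eq_bigr _ (fun k _ => e k)) [RHS]exchange_big /=; apply: eq_bigr => i _.
rewrite [RHS]exchange_big /=; apply: eq_bigr => i' _.
by rewrite -hd mulr_sumr mulr_suml.
Qed.

Lemma termwise (C : numClosedFieldType) (s p r : C) :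
  0 <= s -> 0 <= p -> r \is Num.real -> - s <= r -> r <= s ->
  s ^+ 2 - s * r <= 2 * s ^+ 2 + 2 * p ^+ 2 - 4 * (p * r).
Proof.
move=> hs hp hr h1 h2.
rewrite -subr_ge0.
have rs : s \is Num.real by apply: ger0_real.
have rp : p \is Num.real by apply: ger0_real.
have r4p : 4 * p \is Num.real by rewrite realM // ger0_real.
case/orP: (real_leVge rs r4p) => hc.
- have -> : 2 * s ^+ 2 + 2 * p ^+ 2 - 4 * (p * r) - (s ^+ 2 - s * r)
      = 2 * (s - p) ^+ 2 + (s - r) * (4 * p - s) by ring.
  apply: addr_ge0; first by rewrite mulr_ge0 // -realEsqr realB.
  by rewrite mulr_ge0 // subr_ge0.
- have -> : 2 * s ^+ 2 + 2 * p ^+ 2 - 4 * (p * r) - (s ^+ 2 - s * r)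
      = 4 * p * s + 2 * p ^+ 2 + (r + s) * (s - 4 * p) by ring.
  apply: addr_ge0; first by apply: addr_ge0; rewrite ?mulr_ge0 ?exprn_ge0.
  by rewrite mulr_ge0 // ?subr_ge0 // -lerBlDr sub0r.
Qed.

Lemma Re_sum (C : numClosedFieldType) (d : nat) (c z : 'I_d -> C) :
  (forall k, (c k)^* = c k) ->
  'Re (\sum_(k < d) c k * z k) = \sum_(k < d) c k * 'Re (z k).
Proof.
move=> hc; rewrite ReE rmorph_sum -big_split mulr_suml /=.
apply: eq_bigr => k _; rewrite ReE rmorphM /= hc; ring.
Qed.

Theorem proposition2 (C : numClosedFieldType) (d : nat)
  (phi : 'I_d -> 'cV[C]_d) (Phi Psi : 'cV[C]_d) :
  orthonormal_basis phi -> unit_vec Phi -> unit_vec Psi ->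
  bures (imposition phi Phi Psi) Phi <= 2 * bures Psi Phi.
Proof.
move=> hON hPhi hPsi.
pose a k := inner (phi k) Phi.
pose b k := inner (phi k) Psi.
pose s k := `|a k|.
pose p k := `|b k|.
pose u k := phase (b k).
pose q k := (u k)^* * a k.
have hu : forall k, `|u k| = 1.
  move=> k; rewrite /u /phase; case: ifP => hb; last by rewrite normr1.
  by rewrite normrM normfV normr_id divff // normr_eq0.
have hb : forall k, b k = p k * u k.
  move=> k; rewrite /p /u /phase; case: ifP => hb0.
    by rewrite mulrC divfK // normr_eq0.
  by move/negbFE/eqP: hb0 => ->; rewrite normr0 mul0r.
have hq : forall k, `|q k| = s k.
  by move=> k; rewrite /q normrM norm_conjC hu mul1r.
have hs2 : \sum_(k < d) s k ^+ 2 = 1.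
  rewrite -hPhi (@parseval _ _ _ _ _ hON); apply: eq_bigr => k _; by rewrite normCKC.
have hp2 : \sum_(k < d) p k ^+ 2 = 1.
  rewrite -hPsi (@parseval _ _ _ _ _ hON); apply: eq_bigr => k _; by rewrite normCKC.
have hTPhi : inner (imposition phi Phi Psi) Phi = \sum_(k < d) s k * q k.
  rewrite /inner /imposition.
  have e : forall i : 'I_d,
    ((\sum_(k < d) (`|inner (phi k) Phi| * phase (inner (phi k) Psi)) *: phi k) i 0)^* * Phi i 0
    = \sum_(k < d) s k * ((u k)^* * ((phi k i 0)^* * Phi i 0)).
    move=> i; rewrite summxE rmorph_sum big_distrl /=; apply: eq_bigr => k _.
    rewrite mxE !rmorphM /= conj_normC -/(a k) -/(b k) -/(s k) -/(u k).
    by rewrite !mulrA.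
  rewrite (eq_bigr _ (fun i _ => e i)) exchange_big /=; apply: eq_bigr => k _.
  by rewrite /q /a /inner -!mulr_sumr.
have hPsiPhi : inner Psi Phi = \sum_(k < d) p k * q k.
  rewrite (@parseval _ _ _ _ _ hON); apply: eq_bigr => k _.
  by rewrite -/(b k) -/(a k) hb rmorphM /= conj_normC /q mulrA.
pose G := \sum_(k < d) p k * q k.
pose H := \sum_(k < d) s k * q k.
pose w := G^* / `|G|.
have hwG : w * G = `|G|.
  rewrite /w; have [->|hG] := eqVneq G 0; first by rewrite normr0 !mulr0.
  rewrite mulrAC -normCKC expr2 mulfK //.
  by rewrite normr_eq0.
have hw : `|w| <= 1.
  rewrite /w normrM normfV norm_conjC normr_id.
  have [->|hG] := eqVneq G 0; first by rewrite normr0 mul0r ler01.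
  by rewrite divff // normr_eq0.
pose r k := 'Re (w * q k).
have hr : forall k, - s k <= r k <= s k.
  move=> k; rewrite -real_ler_norml ?Creal_Re //.
  apply: le_trans (leif_le (leif_normC_Re_Creal _)) _.
  by rewrite normrM hq; apply: ler_piMl => //; exact: normr_ge0.
have hsreal : forall k, (s k)^* = s k by move=> k; rewrite conj_normC.
have hpreal : forall k, (p k)^* = p k by move=> k; rewrite conj_normC.
have key : \sum_(k < d) (s k ^+ 2 - s k * r k) <=
    \sum_(k < d) (2 * s k ^+ 2 + 2 * p k ^+ 2 - 4 * (p k * r k)).
  apply: ler_sum => k _; case/andP: (hr k) => h1 h2.
  by apply: termwise; rewrite ?Creal_Re ?normr_ge0.
rewrite !sumrB big_split /= -!mulr_sumr hs2 hp2 in key.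
have hsr : \sum_(k < d) s k * r k = 'Re (w * H).
  have -> : w * H = \sum_(k < d) s k * (w * q k).
    by rewrite /H mulr_sumr; apply: eq_bigr => k _; rewrite mulrCA.
  by rewrite (@Re_sum _ _ s (fun k => w * q k) hsreal).
have hpr : \sum_(k < d) p k * r k = `|G|.
  rewrite -[RHS](Creal_ReP _ (normr_real G)) -hwG.
  have -> : w * G = \sum_(k < d) p k * (w * q k).
    by rewrite /G mulr_sumr; apply: eq_bigr => k _; rewrite mulrCA.
  by rewrite (@Re_sum _ _ p (fun k => w * q k) hpreal).
rewrite hsr hpr in key.
have hReH : 'Re (w * H) <= `|H|.
  apply: le_trans (leif_le (leif_Re_Creal _)) _.
  by rewrite normrM ler_piMl.
have hH1 : `|H| <= 1.
  rewrite -hs2 /H; apply: le_trans (ler_norm_sum _ _ _) _.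
  by apply: ler_sum => k _; rewrite normrM hq ger0_norm ?normr_ge0 // -expr2.
have main : 2 - 2 * `|H| <= 4 * (2 - 2 * `|G|).
  have k2 : 1 - `|H| <= 1 - 'Re (w * H) by apply: lerB.
  rewrite (_ : 2 - 2 * `|H| = 2 * (1 - `|H|)); last by ring.
  rewrite (_ : 4 * (2 - 2 * `|G|) = 2 * (2 * 1 + 2 * 1 - 4 * `|G|)); last by ring.
  by rewrite ler_pM2l //; apply: le_trans k2 key.
rewrite /bures; rewrite hPsiPhi. rewrite hTPhi.
have h0 : 0 <= 2 - 2 * `|H|.
  by rewrite subr_ge0 -[X in _ <= X]mulr1 ler_pM2l.
have h0' : 0 <= 2 - 2 * `|G|.
  by rewrite -(pmulr_rge0 _ (_ : 0 < 4)) //; apply: le_trans h0 main.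
have e4 : sqrtC 4 = 2 :> C.
  by rewrite -(sqrCK (ler0n _ 2)); congr sqrtC; rewrite expr2 -natrM.
have e2 : 2 * sqrtC (2 - 2 * `|G|) = sqrtC (4 * (2 - 2 * `|G|)).
  by rewrite sqrtCM ?nnegrE // e4.
rewrite e2 ler_sqrtC ?nnegrE //.
by rewrite mulr_ge0.
Qed.
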